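(* Let $\mathbf G=(G,\le,\cdot,/,0,1)$ be a left-residuated po-groupoid with commutative multiplication whose underlying poset is a lattice. Then: (i) if $\mathbf G$ satisfies the contraposition law $x/y=\neg y/\neg x$, it satisfies $\neg\neg x=x$; (ii) if $\mathbf G$ satisfies the skew divisibility law $(\neg y/\neg x)\cdot y=x\wedge y$, it satisfies $\neg\neg x=x$; (iii) $\mathbf G$ satisfies the skew divisibility law $(\neg y/\neg x)\cdot y=x\wedge y$ (for all $x,y$) if and only if it satisfies both the divisibility law $(x/y)\cdot y=x\wedge y$ and the contraposition law $x/y=\neg y/\neg x$ (for all $x,y$).
   Context: A (bounded integral) left-residuated po-groupoid is a structure $\mathbf G=(G,\le,\cdot,/,0,1)$ where $(G,\le,0,1)$ is a bounded poset with least element $0$ and greatest element $1$, $\cdot$ is a binary operation on $G$ with $1\cdot x=x\cdot 1=x$ for all $x$, and $/$ is a binary operation on $G$ satisfying the left residuation law: for all $x,y,z\in G$, $x\cdot y\le z\iff x\le z/y$. The negation is $\neg x:=0/x$; $\wedge$ denotes the lattice meet. *)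

(* Defs.v *)
Set Implicit Arguments.

Record LRPOG := {
  carrier :> Type;
  le : carrier -> carrier -> Prop;
  mul : carrier -> carrier -> carrier;
  rdiv : carrier -> carrier -> carrier;
  zero : carrier;
  one : carrier;
  le_refl : forall x, le x x;
  le_antisym : forall x y, le x y -> le y x -> x = y;
  le_trans : forall x y z, le x y -> le y z -> le x z;
  zero_least : forall x, le zero x;
  one_greatest : forall x, le x one;
  mul_1l : forall x, mul one x = x;
  mul_1r : forall x, mul x one = x;
  residuation : forall x y z, le (mul x y) z <-> le x (rdiv z y)
}.

Definition neg {G : LRPOG} (x : G) : G := rdiv G (zero G) x.

Definition is_meet {G : LRPOG} (m : G -> G -> G) : Prop :=
  forall x y, le G (m x y) x /\ le G (m x y) y /\
    (forall z, le G z x -> le G z y -> le G z (m x y)).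

Definition is_join {G : LRPOG} (j : G -> G -> G) : Prop :=
  forall x y, le G x (j x y) /\ le G y (j x y) /\
    (forall z, le G x z -> le G y z -> le G (j x y) z).

Definition commutative_mul (G : LRPOG) : Prop :=
  forall x y : G, mul G x y = mul G y x.

Definition contraposition (G : LRPOG) : Prop :=
  forall x y : G, rdiv G x y = rdiv G (neg y) (neg x).

Definition skew_divisibility {G : LRPOG} (meet : G -> G -> G) : Prop :=
  forall x y : G, mul G (rdiv G (neg y) (neg x)) y = meet x y.

Definition divisibility {G : LRPOG} (meet : G -> G -> G) : Prop :=
  forall x y : G, mul G (rdiv G x y) y = meet x y.

Definition double_negation (G : LRPOG) : Prop :=
  forall x : G, neg (neg x) = x.

(* Main.v *)
Require Import Defs.

Lemma div1 (G : LRPOG) (x : G) : rdiv G x (one G) = x.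
Proof.
  apply le_antisym.
  - pose proof (proj2 (residuation G (rdiv G x (one G)) (one G) x) (le_refl G _)) as H.
    rewrite mul_1r in H. exact H.
  - apply (proj1 (residuation G _ _ _)). rewrite mul_1r. apply le_refl.
Qed.

Lemma neg1 (G : LRPOG) : neg (one G) = zero G.
Proof. unfold neg. apply div1. Qed.

Theorem mainTheorem11 (G : LRPOG) (meet join : G -> G -> G)
  (Hmeet : is_meet meet) (Hjoin : is_join join)
  (Hcomm : commutative_mul G) :
  (contraposition G -> double_negation G) /\
  (skew_divisibility meet -> double_negation G) /\
  (skew_divisibility meet <-> divisibility meet /\ contraposition G).
Proof.
  assert (meet1 : forall x, meet x (one G) = x).
  { intro x. destruct (Hmeet x (one G)) as [A [_ C]].
    apply le_antisym; auto. apply C. apply le_refl. apply one_greatest. }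
  assert (DN : skew_divisibility meet -> double_negation G).
  { intros S x. pose proof (S x (one G)) as H.
    rewrite mul_1r, meet1, neg1 in H. exact H. }
  split; [|split; [exact DN|split]].
  - intros C x. pose proof (C x (one G)) as H.
    rewrite div1, neg1 in H. unfold neg at 1. rewrite <- H. reflexivity.
  - intros S. pose proof (DN S) as D.
    assert (CP : contraposition G).
    { intros x y. apply le_antisym.
      + apply (proj1 (residuation G _ _ _)).
        pose proof (S (neg y) (neg x)) as H. rewrite !D in H.
        rewrite Hcomm in H. rewrite Hcomm, H.
        destruct (Hmeet (neg y) (neg x)) as [A _]. exact A.
      + apply (proj1 (residuation G _ _ _)).
        rewrite S. destruct (Hmeet x y) as [A _]. exact A. }
    split; [|exact CP].
    intros x y. rewrite CP. apply S.
  - intros [Dv CP] x y. rewrite <- CP. apply Dv.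
Qed.
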